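(* For all integers $\ell\ge1$, $k\ge1$, $n\ge1$, $$f_\ell(n,k)\le 2^{\lfloor \ell/2\rfloor}\cdot\lfloor \ell/2\rfloor!\cdot n^{\lfloor (\ell+1)/2\rfloor}.$$ Moreover, if $k\ge\lfloor\log_2(\ell+1)\rfloor$, then $$f_\ell(n,k)\ge \left\lfloor\frac nk\right\rfloor^{\lfloor\log_2(\ell+1)\rfloor}.$$
   Context: For a set $A$ and integer $k\ge1$, the Kneser graph $KG(A,k)$ has vertex set the family of all $k$-element subsets of $A$, two vertices $X,Y$ being adjacent iff $X\cap Y=\emptyset$; $KG(n,k)$ denotes one with an $n$-element base set. The xor-product of graphs $G_1,\dots,G_\ell$ has vertex set $V(G_1)\times\dots\times V(G_\ell)$, two vertices being adjacent iff they are adjacent in an odd number of coordinates. $f_\ell(n,k)$ is the clique number of the xor-product of $\ell$ copies of $KG(n,k)$; equivalently, the maximum size of a family $\mathcal S$ of subsets of $A_1\cup\dots\cup A_\ell$ ($A_i$ pairwise disjoint, $|A_i|=n$) with $|S\cap A_i|=k$ for all $S\in\mathcal S$ and all $i$, such that for distinct $S,T\in\mathcal S$ the number of $i$ with $S\cap T\cap A_i=\emptyset$ is odd. *)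

(* Defs.v *)
From mathcomp Require Import all_boot.
Set Implicit Arguments. Unset Strict Implicit. Unset Printing Implicit Defensive.

(* A vertex of the xor-product of l copies of KG(n,k): an l-tuple of subsets
   of 'I_n (coordinate i lives in the i-th copy of the base set). *)
Definition xvertex (l n : nat) := {ffun 'I_l -> {set 'I_n}}.

Definition is_xvertex (l n k : nat) (X : xvertex l n) : bool :=
  [forall i, #|X i| == k].

Definition kneser_adj (n : nat) (A B : {set 'I_n}) : bool := [disjoint A & B].

Definition xor_adj (l n : nat) (X Y : xvertex l n) : bool :=
  odd #|[set i : 'I_l | kneser_adj (X i) (Y i)]|.

Definition is_xclique (l n k : nat) (C : {set xvertex l n}) : bool :=
  [forall X in C, is_xvertex k X] &&
  [forall X in C, forall Y in C, (X != Y) ==> xor_adj X Y].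

Definition f_xor (l n k : nat) : nat :=
  \max_(C : {set xvertex l n} | is_xclique k C) #|C|.

(* Main.v *)
Require Import Defs.
From mathcomp Require Import all_boot all_algebra ring.
Set Implicit Arguments. Unset Strict Implicit. Unset Printing Implicit Defensive.

Lemma card_sum (T : finType) (C : {set T}) (P : pred T) :
  #|[set x in C | P x]| = \sum_(x in C) (P x : nat).
Proof.
rewrite -sum1dep_card big_mkcondr /=; apply: eq_bigr => x _; by case: (P x).
Qed.

Lemma dbl (T I : finType) (C : {set T}) (A : {set I}) (P : I -> T -> bool) :
  \sum_(i in A) #|[set x in C | P i x]| = \sum_(x in C) #|[set i in A | P i x]|.
Proof.
under eq_bigr => i _ do rewrite card_sum.
rewrite exchange_big /=; apply: eq_bigr => x _.
by rewrite (card_sum A (P^~ x)).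
Qed.

Lemma cover_le (T I : finType) (C : {set T}) (A : {set I}) (P : I -> T -> bool) :
  (forall x, x \in C -> exists2 i, i \in A & P i x) ->
  #|C| <= \sum_(i in A) #|[set x in C | P i x]|.
Proof.
move=> H; rewrite dbl -sum1_card; apply: leq_sum => x xC.
have [i iA Pix] := H x xC; rewrite card_gt0; apply/set0Pn; exists i.
by rewrite inE iA.
Qed.

Section Upper.
Variables (l n k : nat).
Hypothesis hk : 0 < k.

Definition okC (I : {set 'I_l}) (C : {set xvertex l n}) :=
  (forall X, X \in C -> forall i, i \in I -> #|X i| = k) /\
  (forall X Y, X \in C -> Y \in C -> X != Y ->
     odd #|[set i in I | [disjoint X i & Y i]]|).

Lemma base (I : {set 'I_l}) (C : {set xvertex l n}) : #|I| = 0 -> okC I C -> #|C| <= 1.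
Proof.
move=> /eqP; rewrite cards_eq0 => /eqP -> [_ H].
apply/card_le1_eqP => X Y XC YC; apply/eqP; apply: contraT => nXY.
have := H Y X YC XC nXY.
by rewrite (_ : [set i in set0 | _] = set0) ?cards0 //; apply/setP => i; rewrite !inE.
Qed.

Definition Csub (C : {set xvertex l n}) i (x : 'I_n) := [set X in C | x \in X i].

Lemma okC_sub (I : {set 'I_l}) (C : {set xvertex l n}) i x : i \in I -> okC I C -> okC (I :\ i) (Csub C i x).
Proof.
move=> iI [H1 H2]; split.
  by move=> X; rewrite inE => /andP [XC _] j; rewrite inE => /andP [_ jI]; apply: H1.
move=> X Y; rewrite !inE => /andP [XC xX] /andP [YC xY] nXY.
suff -> : [set j in I :\ i | [disjoint X j & Y j]] = [set j in I | [disjoint X j & Y j]] by exact: H2.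
apply/setP => j; rewrite !inE.
case: (eqVneq j i) => [->|] //=.
rewrite iI /=; symmetry; apply/negbTE/negP => /disjoint_setI0 /setP /(_ x).
by rewrite !inE xX xY.
Qed.

Lemma odd_step (I : {set 'I_l}) (C : {set xvertex l n}) i0 M : i0 \in I -> okC I C ->
  (forall C', okC (I :\ i0) C' -> #|C'| <= M) -> k * #|C| <= n * M.
Proof.
move=> i0I oC HM.
have -> : k * #|C| = \sum_(x in [set: 'I_n]) #|Csub C i0 x|.
  rewrite dbl -sum1_card big_distrr /=; apply: eq_bigr => X XC.
  rewrite muln1 -(proj1 oC X XC i0 i0I); apply: eq_card => x; by rewrite !inE.
apply: (@leq_trans (\sum_(x in [set: 'I_n]) M)).
  apply: leq_sum => x _; apply: HM; exact: okC_sub.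
by rewrite sum_nat_const cardsT card_ord.
Qed.

Lemma even_step (I : {set 'I_l}) (C : {set xvertex l n}) B : ~~ odd #|I| -> 0 < #|I| -> okC I C ->
  (forall i C', i \in I -> okC (I :\ i) C' -> k * #|C'| <= B) -> #|C| <= #|I| * B.
Proof.
move=> evI I0 oC HB.
have [C0|[S SC]] := set_0Vmem C; first by rewrite C0 cards0.
pose Ci i := [set T in C | ~~ [disjoint S i & T i]].
have cov : #|C| <= \sum_(i in I) #|Ci i|.
  apply: cover_le => T TC.
  case: (eqVneq T S) => [->|nTS].
    have [i iI] : exists i, i \in I by apply/set0Pn; rewrite -card_gt0.
    exists i => //; rewrite -setI_eq0 setIid -card_gt0 (proj1 oC S SC i iI) //.
  have := (proj2 oC T S TC SC nTS).
  have hc : #|[set i in I | [disjoint T i & S i]]| + #|[set i in I | ~~ [disjoint S i & T i]]| = #|I|.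
    rewrite -(cardsID [set i | [disjoint T i & S i]] I); congr (_ + _); apply: eq_card => i;
    by rewrite !inE andbC // disjoint_sym.
  move=> oddD.
  have : 0 < #|[set i in I | ~~ [disjoint S i & T i]]|.
    rewrite lt0n; apply/negP => /eqP h; move: hc; rewrite h addn0 => hc.
    by move: evI; rewrite -hc oddD.
  by rewrite card_gt0 => /set0Pn [i]; rewrite inE => /andP [iI Hi]; exists i.
apply: (leq_trans cov); rewrite -sum_nat_const.
apply: leq_sum => i iI.
rewrite -(leq_pmul2l hk).
have cov2 : #|Ci i| <= \sum_(x in S i) #|[set T in Ci i | x \in T i]|.
  apply: cover_le => T; rewrite inE => /andP [TC]; rewrite -setI_eq0 => /set0Pn [x].
  rewrite inE => /andP [xS xT]; by exists x.
apply: (leq_trans (leq_mul (leqnn k) cov2)).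
rewrite big_distrr /=.
apply: (@leq_trans (\sum_(x in S i) B)); last first.
  by rewrite sum_nat_const (proj1 oC S SC i iI).
apply: leq_sum => x xS.
apply: leq_trans (HB i (Csub C i x) iI (okC_sub x iI oC)).
rewrite leq_mul2l; apply/orP; right; apply: subset_leq_card.
apply/subsetP => T; rewrite !inE => /andP [/andP [-> _] ->] //.
Qed.


Lemma pick_in (I : {set 'I_l}) : 0 < #|I| -> exists i, i \in I.
Proof. by rewrite card_gt0 => /set0Pn. Qed.

Lemma cardD1' (I : {set 'I_l}) i : i \in I -> #|I| = (#|I :\ i|).+1.
Proof. by move=> iI; rewrite (cardsD1 i I) iI. Qed.

Lemma bound_ind m : forall (I : {set 'I_l}) (C : {set xvertex l n}), okC I C ->
  (#|I| = m.*2 -> #|C| <= 2^m * m`! * n^m) /\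
  (#|I| = m.*2.+1 -> k * #|C| <= 2^m * m`! * n^m.+1).
Proof.
elim: m => [|m IH] I C oC.
  split; first by move=> h; apply: base h oC.
  move=> h; have [i0 i0I] : exists i, i \in I by apply: pick_in; rewrite h.
  rewrite expn0 fact0 !mul1n expn1.
  apply: leq_trans (odd_step (M := 1) i0I oC _) _; last by rewrite muln1.
  move=> C' oC'; apply: base oC'.
  by move: h; rewrite (cardD1' i0I) => -[].
have ev : forall (I : {set 'I_l}) (C : {set xvertex l n}), okC I C ->
    #|I| = m.+1.*2 -> #|C| <= 2^m.+1 * m.+1`! * n^m.+1.
  move=> I' C' oC' h.
  apply: (leq_trans (even_step (B := 2^m * m`! * n^m.+1) _ _ oC' _)).
  - by rewrite h odd_double.
  - by rewrite h doubleS.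
  - move=> i C'' iI oC''; apply: (proj2 (IH _ _ oC'')).
    by move: h; rewrite (cardD1' iI) doubleS => -[].
  rewrite h factS [2 ^ m.+1]expnS -muln2; apply: eq_leq; move: (2 ^ m) (m`!) (n ^ m.+1) => a b c; ring.
split; first exact: ev.
move=> h; have [i0 i0I] : exists i, i \in I by apply: pick_in; rewrite h.
apply: (leq_trans (odd_step i0I oC (M := 2^m.+1 * m.+1`! * n^m.+1) _)).
  move=> C' oC'; apply: ev oC' _.
  by move: h; rewrite (cardD1' i0I) => -[].
rewrite [n ^ m.+2]expnS; apply: eq_leq; move: (2 ^ m.+1) ((m.+1)`!) (n ^ m.+1) => a b c; ring.
Qed.

End Upper.

Lemma upper l n k : 0 < k -> f_xor l n k <= 2 ^ (l./2) * (l./2)`! * n ^ ((l.+1)./2).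
Proof.
move=> hk; apply/bigmax_leqP => C /andP [/forallP Hv /forallP Hc].
have oC : okC k [set: 'I_l] C.
  split.
    move=> X XC i _; move: (Hv X); rewrite XC /= => /forallP /(_ i) /eqP //.
  move=> X Y XC YC nXY; move: (Hc X); rewrite XC /= => /forallP /(_ Y).
  rewrite YC nXY /= /xor_adj /kneser_adj.
  suff -> : [set i in [set: 'I_l] | [disjoint X i & Y i]] = [set i | [disjoint X i & Y i]] by [].
  by apply/setP => i; rewrite !inE.
have hl := odd_double_half l.
have cT : #|[set: 'I_l]| = l by rewrite cardsT card_ord.
case Ol: (odd l) hl => /= hl.
  have e : uphalf l = (l./2).+1.
    by rewrite -{1}hl /= add0n doubleK.
  have := proj2 (bound_ind hk (l./2) oC); rewrite cT => /(_ (esym hl)) h.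
  rewrite e; apply: leq_trans h; exact: leq_pmull.
have e : uphalf l = l./2.
  by rewrite -{1}hl add0n uphalf_double.
have := proj1 (bound_ind hk (l./2) oC); rewrite cT => /(_ (esym hl)) h.
by rewrite e.
Qed.

Lemma disjP (T : finType) (A B : {set T}) :
  reflect (forall x, x \in A -> x \in B -> False) [disjoint A & B].
Proof.
rewrite -setI_eq0; apply: (iffP eqP) => [h x xA xB | h].
  by move: h => /setP /(_ x); rewrite !inE xA xB.
apply/setP => x; rewrite !inE; apply/negbTE/negP => /andP [xA xB]; exact: h x xA xB.
Qed.

Section Lower.
Variables (l n k t q : nat).
Hypotheses (hk : 0 < k) (htk : t <= k) (htl : 2 ^ t <= l.+1) (hqn : q.+1 * k <= n).

Definition NE : {set {set 'I_t}} := powerset [set: 'I_t] :\ set0.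

Lemma inNE (A : {set 'I_t}) : (A \in NE) = (A != set0).
Proof. by rewrite in_setD1 powersetE subsetT andbT. Qed.

Lemma cardNE : (#|NE|).+1 = 2 ^ t.
Proof.
have := cardsD1 set0 (powerset [set: 'I_t]).
by rewrite card_powerset cardsT card_ord powersetE sub0set add1n => ->.
Qed.

Definition J (i : 'I_l) : {set 'I_t} := nth set0 (enum NE) i.

Lemma J_inj : {in [pred i | J i != set0] &, injective J}.
Proof.
move=> i1 i2; rewrite !inE => h1 h2 e.
have lt (i : 'I_l) : J i != set0 -> i < size (enum NE).
  move=> h; rewrite ltnNge; apply/negP => /(nth_default set0) h'.
  by move: h; rewrite /J h' eqxx.
apply: val_inj; apply/eqP; rewrite -(nth_uniq set0 (lt _ h1) (lt _ h2) (enum_uniq _)).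
by apply/eqP.
Qed.

Lemma J_surj (A : {set 'I_t}) : A != set0 -> exists i, J i = A.
Proof.
rewrite -inNE -mem_enum => hA.
have hi : index A (enum NE) < l.
  rewrite -ltnS; apply: leq_trans htl; rewrite -cardNE ltnS cardE.
  by rewrite index_mem.
by exists (Ordinal hi); rewrite /J /= nth_index.
Qed.

Definition sel (A : {set 'I_t}) (r : 'I_k) : option 'I_t :=
  if [pick j in A | val j == val r] is Some j then Some j else [pick j in A].

Lemma sel_in (A : {set 'I_t}) (r : 'I_k) j : sel A r = Some j -> j \in A.
Proof.
rewrite /sel; case: pickP => [j' /andP [h _] [<-] //|_].
by case: pickP => [j' h [<-] //|].
Qed.

Lemma sel_none (A : {set 'I_t}) (r : 'I_k) : sel A r = None -> A = set0.
Proof.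
rewrite /sel; case: pickP => [j' _ //|_]; case: pickP => [//|h _].
by apply/setP => j; rewrite inE; exact: h j.
Qed.

Lemma sel_set0 (r : 'I_k) : sel set0 r = None.
Proof.
rewrite /sel; case: pickP => [j /andP []|_]; first by rewrite inE.
by case: pickP => [j|]; rewrite ?inE.
Qed.

Lemma sel_widen (A : {set 'I_t}) j : j \in A -> sel A (widen_ord htk j) = Some j.
Proof.
move=> jA; rewrite /sel; case: pickP => [j' /andP [_ /eqP e]|h].
  by congr Some; apply: val_inj.
by move: (h j); rewrite jA eqxx.
Qed.

Definition word := {ffun 'I_t -> 'I_q.+1}.

Definition g (A : {set 'I_t}) (a : word) (r : 'I_k) : 'I_q.+1 :=
  if sel A r is Some j then a j else ord0.

Definition Sg (A : {set 'I_t}) (a : word) : {set 'I_k * 'I_q.+1} :=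
  [set (r, g A a r) | r : 'I_k].

Lemma card_Sg (A : {set 'I_t}) (a : word) : #|Sg A a| = k.
Proof.
rewrite card_imset ?card_ord // => r1 r2 [] //.
Qed.

Lemma disj_Sg (A : {set 'I_t}) (a b : word) :
  [disjoint Sg A a & Sg A b] = (A != set0) && (A \subset [set j | a j != b j]).
Proof.
apply/disjP/idP.
  move=> H; case: (eqVneq A set0) => [A0|An0] /=.
    subst A; exfalso; apply: (H (Ordinal hk, ord0)); apply/imsetP; exists (Ordinal hk) => //;
    by rewrite /g sel_set0.
  apply/subsetP => j jA; rewrite inE; apply/negP => /eqP e.
  apply: (H (widen_ord htk j, a j)); apply/imsetP; exists (widen_ord htk j) => //;
  by rewrite /g sel_widen // e.
move=> /andP [An0 /subsetP sub] p /imsetP [r _ ->] /imsetP [r' _ [e1 e2]].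
move: e2; rewrite -e1 /g; case E: sel => [j|].
  move/eqP; apply/negP; move: (sub j (sel_in E)); by rewrite inE.
by move: An0; rewrite (sel_none E) eqxx.
Qed.


Lemma hkn : #|{: 'I_k * 'I_q.+1}| <= n.
Proof. by rewrite card_prod !card_ord mulnC. Qed.

Definition emb (p : 'I_k * 'I_q.+1) : 'I_n := widen_ord hkn (enum_rank p).

Lemma emb_inj : injective emb.
Proof. move=> p1 p2 /(congr1 val) /= e; apply: enum_rank_inj; exact: val_inj. Qed.

Definition Phi (a : word) : xvertex l n := [ffun i => emb @: Sg (J i) a].

Lemma card_Phi a i : #|Phi a i| = k.
Proof. by rewrite ffunE card_imset ?card_Sg //; exact: emb_inj. Qed.

Lemma disj_Phi a b i :
  [disjoint Phi a i & Phi b i] = (J i != set0) && (J i \subset [set j | a j != b j]).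
Proof.
rewrite !ffunE -setI_eq0 -imsetI; last by move=> x y _ _; exact: emb_inj.
by rewrite imset_eq0 setI_eq0 disj_Sg.
Qed.

Lemma count_odd a b : a != b ->
  odd #|[set i : 'I_l | [disjoint Phi a i & Phi b i]]|.
Proof.
move=> nab; set D := [set j | a j != b j].
have D0 : 0 < #|D|.
  rewrite card_gt0; apply/set0Pn.
  case: (boolP [exists j, a j != b j]) => [/existsP [j hj] | /existsPn h].
    by exists j; rewrite inE.
  exfalso; move: nab; apply/negP; rewrite negbK; apply/eqP/ffunP => j.
  by move/negPn/eqP: (h j).
set Sset := [set i : 'I_l | [disjoint Phi a i & Phi b i]].
have -> : #|Sset| = #|J @: Sset|.
  rewrite card_in_imset //; move=> i1 i2; rewrite !inE !disj_Phi => /andP [h1 _] /andP [h2 _].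
  by apply: J_inj; rewrite inE.
have -> : J @: Sset = powerset D :\ set0.
  apply/setP => A; rewrite in_setD1 powersetE; apply/imsetP/idP.
    by move=> [i]; rewrite inE disj_Phi => h ->.
  move=> /andP [An0 AD]; have [i Ji] := J_surj An0.
  by exists i => //; rewrite inE disj_Phi Ji An0 AD.
have := cardsD1 set0 (powerset D).
rewrite card_powerset powersetE sub0set add1n => h.
have := oddX 2 #|D|; rewrite h /= -(prednK D0) /=; exact: negbFE.
Qed.

Lemma Phi_inj : injective Phi.
Proof.
move=> a b e; apply/eqP; apply: contraT => nab.
have := count_odd nab.
suff -> : [set i : 'I_l | [disjoint Phi a i & Phi b i]] = set0 by rewrite cards0.
apply/setP => i; rewrite !inE.
by rewrite e -setI_eq0 setIid; apply/negbTE; rewrite -card_gt0 card_Phi.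
Qed.

Lemma lower_main : q.+1 ^ t <= f_xor l n k.
Proof.
have -> : q.+1 ^ t = #|Phi @: [set: word]|.
  by rewrite card_imset ?cardsT ?card_ffun ?card_ord //; exact: Phi_inj.
apply: leq_bigmax_cond; apply/andP; split.
  apply/forallP => X; apply/implyP => /imsetP [a _ ->].
  by apply/forallP => i; rewrite card_Phi.
apply/forallP => X; apply/implyP => /imsetP [a _ ->].
apply/forallP => Y; apply/implyP => /imsetP [b _ ->].
apply/implyP => nab; rewrite /xor_adj /kneser_adj; apply: count_odd.
by apply: contraNneq nab => ->.
Qed.

End Lower.

Theorem theorem1p3 (l k n : nat) (hl : 1 <= l) (hk : 1 <= k) (hn : 1 <= n) :
  f_xor l n k <= 2 ^ (l./2) * (l./2)`! * n ^ ((l.+1)./2) /\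
  (trunc_log 2 l.+1 <= k -> (n %/ k) ^ (trunc_log 2 l.+1) <= f_xor l n k).
Proof.
split; first exact: upper.
move=> htk.
have ht : 0 < trunc_log 2 l.+1 by apply: trunc_log_max => //; rewrite expn1 ltnS.
have htl : 2 ^ trunc_log 2 l.+1 <= l.+1 by apply: trunc_logP.
case E: (n %/ k) => [|q]; first by rewrite exp0n.
have hqn : q.+1 * k <= n by rewrite -E leq_divM.
exact: lower_main hk htk htl hqn.
Qed.
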